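(* Let $S$ be epsilon-strongly graded and $g\in G$. Then: (i) if $M$ is a gr-simple graded left $S$-module, then $\mathrm{Ind}(M_g)$ is either zero or gr-simple; (ii) if $M$ is an injective object of $S$-gr which is $\mathcal{C}_g$-torsion free, then $\mathrm{Ind}(M_g)$ is an injective object of $S$-gr; (iii) if $M$ is a projective object of $S$-gr, then $M_g$ is a projective left $R$-module.
   Context: $G$ is a group with identity $e$; $S=\bigoplus_{g\in G}S_g$ is an associative unital ring graded by $G$, $R=S_e$. $S$ is epsilon-strongly graded if for each $g\in G$ the ideal $S_gS_{g^{-1}}$ (finite sums of products) of $R$ has an identity $\epsilon_g$ with $\epsilon_g s=s=s\epsilon_{g^{-1}}$ for all $s\in S_g$. $S$-gr is the category of graded left $S$-modules $M=\bigoplus_g M_g$ ($S_gM_h\subseteq M_{gh}$) with degree-preserving $S$-linear maps; $M_g$ is a left $R$-module. A graded submodule $N\subseteq M$ satisfies $N=\bigoplus_g(N\cap M_g)$; $M$ is gr-simple if $0$ and $M$ are its only graded submodules. $\mathrm{Ind}(N)=S\otimes_R N$ with grading $(S\otimes_R N)_h=S_h\otimes_R N$. $\mathcal{C}_g$ is the class of graded left $S$-modules $N$ with $N_g=0$; for $M$ in $S$-gr, $t_{\mathcal{C}_g}(M)$ is the sum of all graded submodules of $M$ belonging to $\mathcal{C}_g$, and $M$ is $\mathcal{C}_g$-torsion free if $t_{\mathcal{C}_g}(M)=0$. *)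

(* Defs.v *)
From HB Require Import structures.
From mathcomp Require Import all_boot all_order all_algebra.
Set Implicit Arguments. Unset Strict Implicit. Unset Printing Implicit Defensive.
Import GRing.Theory.
Local Open Scope ring_scope.

Section Defs.
Variable G : groupType.

Definition direct_sum (V : zmodType) (A : G -> V -> Prop) : Prop :=
  (forall g, A g 0 /\ (forall x y, A g x -> A g y -> A g (x - y))) /\
  (forall v : V, exists l : seq (G * V),
      (forall p, p \in l -> A p.1 p.2) /\ v = \sum_(p <- l) p.2) /\
  (forall l : seq (G * V), uniq (map fst l) ->
      (forall p, p \in l -> A p.1 p.2) -> \sum_(p <- l) p.2 = 0 ->
      forall p, p \in l -> p.2 = 0).

Variable S : pzRingType.
Variable SG : G -> S -> Prop.

Definition graded_ring : Prop :=
  direct_sum SG /\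
  (forall g h (x y : S), SG g x -> SG h y -> SG (g * h)%g (x * y)).

Definition ideal_gginv (g : G) (z : S) : Prop :=
  exists l : seq (S * S),
    (forall p, p \in l -> SG g p.1 /\ SG (g^-1)%g p.2) /\
    z = \sum_(p <- l) p.1 * p.2.

Definition eps_strongly_graded : Prop :=
  exists eps : G -> S, forall g,
    ideal_gginv g (eps g) /\
    (forall x, ideal_gginv g x -> eps g * x = x /\ x * eps g = x) /\
    (forall s, SG g s -> eps g * s = s /\ s * eps (g^-1)%g = s).

Definition graded_module (M : lmodType S) (MG : G -> M -> Prop) : Prop :=
  direct_sum MG /\
  (forall g h (s : S) (x : M), SG g s -> MG h x -> MG (g * h)%g (s *: x)).

Definition graded_submodule (M : lmodType S) (MG : G -> M -> Prop)
    (N : M -> Prop) : Prop :=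
  N 0 /\ (forall x y, N x -> N y -> N (x - y)) /\
  (forall (s : S) x, N x -> N (s *: x)) /\
  (forall x, N x -> exists l : seq (G * M),
      (forall p, p \in l -> MG p.1 p.2 /\ N p.2) /\ x = \sum_(p <- l) p.2).

Definition gr_simple (M : lmodType S) (MG : G -> M -> Prop) : Prop :=
  forall N : M -> Prop, graded_submodule MG N ->
    (forall x, N x -> x = 0) \/ (forall x, N x).

Definition gr_morphism (M M' : lmodType S) (MG : G -> M -> Prop)
    (MG' : G -> M' -> Prop) (f : M -> M') : Prop :=
  (forall (s : S) x y, f (s *: x + y) = s *: f x + f y) /\
  (forall g x, MG g x -> MG' g (f x)).

(* injective object of S-gr (monomorphisms of S-gr are the injective maps) *)
Definition gr_injective (M : lmodType S) (MG : G -> M -> Prop) : Prop :=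
  forall (A B : lmodType S) (AG : G -> A -> Prop) (BG : G -> B -> Prop),
    graded_module AG -> graded_module BG ->
    forall i : A -> B, gr_morphism AG BG i -> injective i ->
    forall f : A -> M, gr_morphism AG MG f ->
    exists h : B -> M, gr_morphism BG MG h /\ (forall a, h (i a) = f a).

(* projective object of S-gr (epimorphisms of S-gr are the surjective maps) *)
Definition gr_projective (M : lmodType S) (MG : G -> M -> Prop) : Prop :=
  forall (A B : lmodType S) (AG : G -> A -> Prop) (BG : G -> B -> Prop),
    graded_module AG -> graded_module BG ->
    forall p : A -> B, gr_morphism AG BG p -> (forall b, exists a, p a = b) ->
    forall f : M -> B, gr_morphism MG BG f ->
    exists h : M -> A, gr_morphism MG AG h /\ (forall x, p (h x) = f x).

(* Left modules over R = S_e : an abelian group V with an action of S whose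
   restriction to S_e satisfies the module axioms (values of the action
   outside S_e are irrelevant). *)
Definition R_module (V : zmodType) (act : S -> V -> V) : Prop :=
  forall (r r' : S) (x y : V), SG 1%g r -> SG 1%g r' ->
    act r (x + y) = act r x + act r y /\
    act (r + r') x = act r x + act r' x /\
    act (r * r') x = act r (act r' x) /\
    act 1 x = x.

Definition R_linear (V W : zmodType) (actV : S -> V -> V) (actW : S -> W -> W)
    (f : V -> W) : Prop :=
  forall (r : S) x y, SG 1%g r -> f (actV r x + y) = actW r (f x) + f y.

(* M_g is a projective left R-module (lifting property against surjective
   R-linear maps); maps out of M_g are represented by maps M -> _ whose
   values off M_g are irrelevant. *)
Definition R_projective_component (M : lmodType S) (MG : G -> M -> Prop)
    (g : G) : Prop :=
  forall (A B : zmodType) (actA : S -> A -> A) (actB : S -> B -> B),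
    R_module actA -> R_module actB ->
    forall p : A -> B, R_linear actA actB p -> (forall b, exists a, p a = b) ->
    forall f : M -> B,
      (forall (r : S) x y, SG 1%g r -> MG g x -> MG g y ->
         f (r *: x + y) = actB r (f x) + f y) ->
    exists h : M -> A,
      (forall (r : S) x y, SG 1%g r -> MG g x -> MG g y ->
         h (r *: x + y) = actA r (h x) + h y) /\
      (forall x, MG g x -> p (h x) = f x).

Definition in_Cg (M : lmodType S) (MG : G -> M -> Prop) (g : G)
    (N : M -> Prop) : Prop :=
  graded_submodule MG N /\ (forall x, N x -> MG g x -> x = 0).

Definition torsion_Cg (M : lmodType S) (MG : G -> M -> Prop) (g : G)
    (x : M) : Prop :=
  exists l : seq M,
    (forall y, y \in l -> exists N, in_Cg MG g N /\ N y) /\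
    x = \sum_(y <- l) y.

Definition Cg_torsion_free (M : lmodType S) (MG : G -> M -> Prop) (g : G)
    : Prop := forall x, torsion_Cg MG g x -> x = 0.

(* (T, beta) is a tensor product  S (x)_R M_g  (given by its universal
   property), with its natural left S-module structure
   s . (s' (x) n) = s s' (x) n.  beta s n stands for s (x) n; its values for
   n outside M_g are irrelevant. *)
Definition is_Ind (M : lmodType S) (MG : G -> M -> Prop) (g : G)
    (T : lmodType S) (beta : S -> M -> T) : Prop :=
  (forall s s' n, MG g n -> beta (s + s') n = beta s n + beta s' n) /\
  (forall s n n', MG g n -> MG g n' -> beta s (n + n') = beta s n + beta s n') /\
  (forall s r n, SG 1%g r -> MG g n -> beta (s * r) n = beta s (r *: n)) /\
  (forall (s s' : S) n, MG g n -> s *: beta s' n = beta (s * s') n) /\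
  (forall (A : zmodType) (f : S -> M -> A),
     (forall s s' n, MG g n -> f (s + s') n = f s n + f s' n) ->
     (forall s n n', MG g n -> MG g n' -> f s (n + n') = f s n + f s n') ->
     (forall s r n, SG 1%g r -> MG g n -> f (s * r) n = f s (r *: n)) ->
     exists phi : T -> A, (forall t t', phi (t + t') = phi t + phi t') /\
       (forall s n, MG g n -> phi (beta s n) = f s n)) /\
  (forall (A : zmodType) (phi phi' : T -> A),
     (forall t t', phi (t + t') = phi t + phi t') ->
     (forall t t', phi' (t + t') = phi' t + phi' t') ->
     (forall s n, MG g n -> phi (beta s n) = phi' (beta s n)) ->
     forall t, phi t = phi' t).

Definition Ind_grading (M : lmodType S) (MG : G -> M -> Prop) (g : G)
    (T : lmodType S) (beta : S -> M -> T) (h : G) (t : T) : Prop :=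
  exists l : seq (S * M),
    (forall p, p \in l -> SG h p.1 /\ MG g p.2) /\
    t = \sum_(p <- l) beta p.1 p.2.

End Defs.

(* Main.v *)
Require Import Defs.
From HB Require Import structures.
From mathcomp Require Import all_boot all_order all_algebra.
From mathcomp Require Import boolp functions.
From Stdlib Require Import ClassicalEpsilon.
Set Implicit Arguments. Unset Strict Implicit. Unset Printing Implicit Defensive.
Import GRing.Theory.
Local Open Scope ring_scope.

Lemma sum_pick (V : zmodType) (K : eqType) (s : seq K) k (x : V) :
  uniq s -> \sum_(j <- s) (if k == j then x else 0) = if k \in s then x else 0.
Proof.
elim: s => [|a s IH] /=; first by rewrite big_nil.
case/andP => nas us; rewrite big_cons IH // in_cons.
case: eqP => [->|_] /=; last by rewrite add0r.
by rewrite (negbTE nas) addr0.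
Qed.

Lemma big_regroup (V : zmodType) (I K : eqType) (f : I -> K) (F : I -> V) (r : seq I) :
  \sum_(k <- undup (map f r)) \sum_(i <- r | f i == k) F i = \sum_(i <- r) F i.
Proof.
under eq_bigr => k _ do rewrite big_mkcond /=.
rewrite exchange_big /=; apply: eq_big_seq => i ir.
rewrite (eq_bigr (fun k => if f i == k then F i else 0)); last by move=> k _; case: ifP.
by rewrite sum_pick ?undup_uniq // mem_undup map_f.
Qed.

Section DS.
Variables (G : groupType) (V : zmodType) (A : G -> V -> Prop).
Hypothesis hA : direct_sum A.

Lemma ds0 k : A k 0. Proof. exact: (hA.1 k).1. Qed.
Lemma dsB k x y : A k x -> A k y -> A k (x - y). Proof. exact: (hA.1 k).2. Qed.
Lemma dsN k x : A k x -> A k (- x).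
Proof. by move=> h; rewrite -sub0r; apply: dsB => //; apply: ds0. Qed.
Lemma dsD k x y : A k x -> A k y -> A k (x + y).
Proof. by move=> hx hy; rewrite -[y]opprK; apply: dsB => //; apply: dsN. Qed.
Lemma ds_sum k (I : eqType) (r : seq I) (P : pred I) (F : I -> V) :
  (forall i, i \in r -> P i -> A k (F i)) -> A k (\sum_(i <- r | P i) F i).
Proof.
move=> h; rewrite big_seq_cond; apply: (big_ind (A k)); first exact: ds0.
  exact: dsD.
by move=> i /andP[]; apply: h.
Qed.

Lemma ds_comp (l : seq (G * V)) :
  (forall p, p \in l -> A p.1 p.2) -> \sum_(p <- l) p.2 = 0 ->
  forall k, \sum_(p <- l | p.1 == k) p.2 = 0.
Proof.
move=> hl hs k.
pose l' := [seq (j, \sum_(p <- l | p.1 == j) p.2) | j <- undup (map fst l)].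
have ul' : uniq (map fst l') by rewrite -map_comp map_id undup_uniq.
have hl' : forall p, p \in l' -> A p.1 p.2.
  move=> p /mapP[j _ ->] /=; apply: ds_sum => i il /eqP <-; exact: hl.
have sl' : \sum_(p <- l') p.2 = 0 by rewrite big_map /= big_regroup.
have := (hA.2.2 l' ul' hl' sl').
case kin: (k \in map fst l) => h.
  by have := h (k, \sum_(p <- l | p.1 == k) p.2); apply; apply/mapP; exists k; rewrite ?mem_undup.
rewrite big1_seq // => p /andP[/eqP pk pl]; move: kin; rewrite -pk.
by rewrite map_f.
Qed.

Lemma ds_comp2 (l1 l2 : seq (G * V)) :
  (forall p, p \in l1 -> A p.1 p.2) -> (forall p, p \in l2 -> A p.1 p.2) ->
  \sum_(p <- l1) p.2 = \sum_(p <- l2) p.2 ->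
  forall k, \sum_(p <- l1 | p.1 == k) p.2 = \sum_(p <- l2 | p.1 == k) p.2.
Proof.
move=> h1 h2 e k; apply/eqP; rewrite -subr_eq0; apply/eqP.
pose l := l1 ++ [seq (p.1, - p.2) | p <- l2].
have hl : forall p, p \in l -> A p.1 p.2.
  move=> p; rewrite mem_cat => /orP[/h1 //|/mapP[q /h2 q2 ->]] /=; exact: dsN.
have := ds_comp hl _ k; rewrite !big_cat !big_map /= e sumrN subrr => /(_ erefl).
by rewrite sumrN.
Qed.

Definition dsdec (v : V) : seq (G * V) :=
  epsilon (inhabits [::]) (fun l => (forall p, p \in l -> A p.1 p.2) /\ v = \sum_(p <- l) p.2).

Lemma dsdecP v : (forall p, p \in dsdec v -> A p.1 p.2) /\ v = \sum_(p <- dsdec v) p.2.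
Proof. exact: (epsilon_spec _ _ (hA.2.1 v)). Qed.

Definition dsproj k v := \sum_(p <- dsdec v | p.1 == k) p.2.

Lemma proj_hom k v : A k (dsproj k v).
Proof. apply: ds_sum => p pl /eqP <-; exact: (dsdecP v).1. Qed.

Lemma proj_spec (l : seq (G * V)) v k : (forall p, p \in l -> A p.1 p.2) ->
  v = \sum_(p <- l) p.2 -> dsproj k v = \sum_(p <- l | p.1 == k) p.2.
Proof. move=> hl e; apply: ds_comp2 => //; [exact: (dsdecP v).1| by rewrite -e -(dsdecP v).2]. Qed.

Lemma projD k u v : dsproj k (u + v) = dsproj k u + dsproj k v.
Proof.
rewrite (@proj_spec (dsdec u ++ dsdec v) _ k) ?big_cat //; last by rewrite -(dsdecP u).2 -(dsdecP v).2.
by move=> p; rewrite mem_cat => /orP[/(dsdecP u).1|/(dsdecP v).1].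
Qed.

Lemma proj_in j k v : A j v -> dsproj k v = if j == k then v else 0.
Proof.
move=> hv; rewrite (@proj_spec [:: (j, v)] v k).
- by rewrite big_cons big_nil /=; case: ifP => _; rewrite ?addr0.
- by move=> p; rewrite inE => /eqP->.
- by rewrite big_cons big_nil addr0.
Qed.

Lemma proj0 k : dsproj k 0 = 0.
Proof. by rewrite (@proj_in k k 0) ?eqxx //; apply: ds0. Qed.

Lemma projN k v : dsproj k (- v) = - dsproj k v.
Proof. by apply/eqP; rewrite -subr_eq0 opprK -projD addNr proj0. Qed.

Lemma proj_sum k (I : Type) (r : seq I) (F : I -> V) :
  dsproj k (\sum_(i <- r) F i) = \sum_(i <- r) dsproj k (F i).
Proof.
elim: r => [|a r IH]; first by rewrite !big_nil proj0.
by rewrite !big_cons projD IH.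
Qed.

Lemma additive0 (W W' : zmodType) (Phi : W -> W') :
  (forall x y, Phi (x + y) = Phi x + Phi y) -> Phi 0 = 0.
Proof.
move=> hP; have h := hP 0 0; rewrite addr0 in h.
by apply: (addrI (Phi 0)); rewrite -h addr0.
Qed.

Lemma additiveN (W W' : zmodType) (Phi : W -> W') x :
  (forall x y, Phi (x + y) = Phi x + Phi y) -> Phi (- x) = - Phi x.
Proof.
move=> hP; apply: (addrI (Phi x)); by rewrite -hP !subrr additive0.
Qed.

Lemma additiveB (W W' : zmodType) (Phi : W -> W') x y :
  (forall x y, Phi (x + y) = Phi x + Phi y) -> Phi (x - y) = Phi x - Phi y.
Proof. by move=> hP; rewrite hP additiveN. Qed.

Lemma additive_sum (W W' : zmodType) (Phi : W -> W') (I : Type) (r : seq I) (F : I -> W) :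
  (forall x y, Phi (x + y) = Phi x + Phi y) ->
  Phi (\sum_(i <- r) F i) = \sum_(i <- r) Phi (F i).
Proof.
move=> hP; have P0 := additive0 hP.
elim: r => [|a r IH]; first by rewrite !big_nil.
by rewrite !big_cons hP IH.
Qed.

Lemma sum_proj_fun (W : zmodType) (Phi : V -> W) (L : seq G) v :
  uniq L -> (forall x y, Phi (x + y) = Phi x + Phi y) ->
  (forall j x, j \notin L -> A j x -> Phi x = 0) ->
  Phi v = \sum_(k <- L) Phi (dsproj k v).
Proof.
move=> uL hP h0.
rewrite {1}(dsdecP v).2 (@additive_sum _ _ Phi) //.
have P0 := additive0 hP.
transitivity (\sum_(k <- L) \sum_(p <- dsdec v) (if p.1 == k then Phi p.2 else 0)); last first.
  apply: eq_bigr => k _; rewrite /dsproj [in RHS]big_mkcond (@additive_sum _ _ Phi) //.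
  by apply: eq_bigr => p _; case: ifP.
rewrite exchange_big /=; apply: eq_big_seq => p pd.
rewrite (eq_bigr (fun k => if p.1 == k then Phi p.2 else 0)); last by move=> k _; case: ifP.
rewrite sum_pick //; case: ifPn => // nL.
by apply: h0 nL ((dsdecP v).1 p pd).
Qed.

Lemma proj_fun (W : zmodType) (Phi : V -> W) k v :
  (forall x y, Phi (x + y) = Phi x + Phi y) ->
  (forall j x, j != k -> A j x -> Phi x = 0) -> Phi v = Phi (dsproj k v).
Proof.
move=> hP h0; rewrite (@sum_proj_fun _ Phi [:: k]) // ?big_cons ?big_nil ?addr0 //.
by move=> j x; rewrite inE; apply: h0.
Qed.

End DS.

Section Span. Variables (V : zmodType) (P : V -> Prop).
Definition spanb : {pred V} := fun v => `[< exists l : seq V, (forall x, x \in l -> P x \/ P (- x)) /\ v = \sum_(x <- l) x >].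
Lemma spanb_closed : GRing.zmod_closed spanb.
Proof.
split.
  by apply/asboolP; exists [::]; rewrite big_nil.
move=> u v /asboolP[lu [hu eu]] /asboolP[lv [hv ev]]; apply/asboolP.
exists (lu ++ map -%R lv); split.
  move=> x; rewrite mem_cat => /orP[/hu //|/mapP[y /hv hy ->]].
  by rewrite opprK; case: hy; [right|left].
by rewrite big_cat big_map eu ev sumrN.
Qed.
HB.instance Definition _ := GRing.isZmodClosed.Build V spanb spanb_closed.
Inductive spanT := SpanT (v : V) of v \in spanb.
Definition spanval (w : spanT) := let: SpanT v _ := w in v.
HB.instance Definition _ := [isSub of spanT for spanval].
HB.instance Definition _ := [Choice of spanT by <:].
HB.instance Definition _ := [SubChoice_isSubZmodule of spanT by <:].
Lemma spanvalD (x y : spanT) : val (x + y) = val x + val y.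
Proof. by []. Qed.
Lemma spanval_insubd x : x \in spanb -> val (insubd (0 : spanT) x) = x.
Proof. by move=> h; rewrite val_insubd h. Qed.
End Span.

Section DS2.
Variables (G : groupType) (V W : zmodType) (A : G -> V -> Prop) (B : G -> W -> Prop).
Hypotheses (hA : direct_sum A) (hB : direct_sum B).

Lemma proj_morph (phi : G -> G) (f : V -> W) : injective phi ->
  (forall x y, f (x + y) = f x + f y) ->
  (forall k x, A k x -> B (phi k) (f x)) ->
  forall k v, dsproj B (phi k) (f v) = f (dsproj A k v).
Proof.
move=> iphi fD fh k v.
rewrite (@proj_spec _ _ _ hB [seq (phi p.1, f p.2) | p <- dsdec A v] (f v) (phi k)).
- rewrite big_map /= /dsproj [in RHS]big_mkcond (@additive_sum _ _ f) // big_mkcond /=.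
  apply: eq_bigr => p _; rewrite (inj_eq iphi); case: ifP => _ //; by rewrite (additive0 fD).
- by move=> p /mapP[q qd ->] /=; apply: fh; exact: (dsdecP hA v).1.
- by rewrite big_map -(@additive_sum _ _ f) // -(dsdecP hA v).2.
Qed.
End DS2.

Section GR.
Variables (G : groupType) (S : pzRingType) (SG : G -> S -> Prop).
Hypothesis hgr : graded_ring SG.

Lemma one_hom : SG 1%g 1.
Proof.
have hS := hgr.1; set u := dsproj SG 1%g 1.
have hh : forall h s, SG h s -> u * s = s.
  move=> h s hs.
  have := @proj_morph _ _ _ _ _ hS hS (fun k => (k * h)%g) (fun x => x * s) (mulIg h)
    (fun x y => mulrDl x y s) (fun k x hx => hgr.2 _ _ _ _ hx hs) 1%g 1.
  by rewrite mul1g mul1r (proj_in hS _ hs) eqxx.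
have hu : forall s, u * s = s.
  move=> s; rewrite (dsdecP hS s).2 mulr_sumr; apply: eq_big_seq => p pd.
  exact: hh _ _ ((dsdecP hS s).1 p pd).
have -> : 1 = u by rewrite -[u]mulr1 hu.
rewrite /u; exact: (proj_hom hS).
Qed.

End GR.

Section IndSec.
Variables (G : groupType) (S : pzRingType) (SG : G -> S -> Prop).
Hypothesis hgr : graded_ring SG.
Variables (M : lmodType S) (MG : G -> M -> Prop) (hM : graded_module SG MG) (g : G).
Variables (T : lmodType S) (beta : S -> M -> T) (hI : is_Ind SG MG g beta).

Lemma bS_add s s' n : MG g n -> beta (s + s') n = beta s n + beta s' n.
Proof. exact: hI.1. Qed.
Lemma bN_add s n n' : MG g n -> MG g n' -> beta s (n + n') = beta s n + beta s n'.
Proof. exact: hI.2.1. Qed.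
Lemma b_bal s r n : SG 1%g r -> MG g n -> beta (s * r) n = beta s (r *: n).
Proof. exact: hI.2.2.1. Qed.
Lemma b_scale s s' n : MG g n -> s *: beta s' n = beta (s * s') n.
Proof. exact: hI.2.2.2.1. Qed.

Lemma b0s n : MG g n -> beta 0 n = 0.
Proof. by move=> hn; apply: (additive0 (Phi := fun s => beta s n)) => x y; apply: bS_add. Qed.
Lemma bNs s n : MG g n -> beta (- s) n = - beta s n.
Proof. by move=> hn; apply: (additiveN (Phi := fun s => beta s n)) => x y; apply: bS_add. Qed.
Lemma bs0 s : beta s 0 = 0.
Proof.
have h0 := ds0 hM.1 g; have := bN_add s h0 h0; rewrite addr0 => h.
by apply: (addrI (beta s 0)); rewrite -h addr0.
Qed.

Lemma b_sumS (I : Type) (r : seq I) (F : I -> S) n : MG g n ->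
  beta (\sum_(i <- r) F i) n = \sum_(i <- r) beta (F i) n.
Proof. by move=> hn; apply: (additive_sum (Phi := fun s => beta s n)) => x y; apply: bS_add. Qed.

Lemma b_sumN (I : eqType) (r : seq I) (F : I -> M) s :
  (forall i, i \in r -> MG g (F i)) ->
  beta s (\sum_(i <- r) F i) = \sum_(i <- r) beta s (F i).
Proof.
elim: r => [|a r IH] h; first by rewrite !big_nil bs0.
rewrite !big_cons bN_add ?IH //.
- by move=> i ir; apply: h; rewrite inE ir orbT.
- by apply: h; rewrite inE eqxx.
- by apply: (ds_sum hM.1) => i ir _; apply: h; rewrite inE ir orbT.
Qed.

Definition isbeta (x : T) := exists s n, MG g n /\ x = beta s n.

Lemma ind_gen_list (lx : seq T) : (forall x, x \in lx -> isbeta x \/ isbeta (- x)) ->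
  exists l : seq (S * M), (forall p, p \in l -> MG g p.2) /\
     \sum_(x <- lx) x = \sum_(p <- l) beta p.1 p.2.
Proof.
elim: lx => [|a lx IH] h; first by exists [::]; rewrite !big_nil.
have [l [hl el]] : exists l : seq (S * M), (forall p, p \in l -> MG g p.2) /\ \sum_(x <- lx) x = \sum_(p <- l) beta p.1 p.2.
  by apply: IH => x xl; apply: h; rewrite inE xl orbT.
have [[s [n [hn ->]]]|[s [n [hn ea]]]] := h a (mem_head _ _).
  exists ((s, n) :: l); split; last by rewrite !big_cons el.
  by move=> p; rewrite inE => /orP[/eqP-> //|/hl].
exists ((- s, n) :: l); split; last by rewrite !big_cons el /= bNs // -ea opprK.
by move=> p; rewrite inE => /orP[/eqP-> //|/hl].
Qed.

Lemma ind_gen t : exists l : seq (S * M), (forall p, p \in l -> MG g p.2) /\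
  t = \sum_(p <- l) beta p.1 p.2.
Proof.
pose f (s : S) (n : M) : spanT isbeta := insubd 0 (beta s n).
have inb : forall s n, MG g n -> beta s n \in spanb isbeta.
  move=> s n hn; apply/asboolP; exists [:: beta s n]; split.
    by move=> x; rewrite inE => /eqP->; left; exists s, n.
  by rewrite big_cons big_nil addr0.
have fv : forall s n, MG g n -> spanval (f s n) = beta s n.
  by move=> s n hn; exact: (spanval_insubd (inb s n hn)).
have c1 : forall s s' n, MG g n -> f (s + s') n = f s n + f s' n.
  by move=> s s' n hn; apply: val_inj; rewrite /= !fv // bS_add.
have c2 : forall s n n', MG g n -> MG g n' -> f s (n + n') = f s n + f s n'.
  move=> s n n' hn hn'; apply: val_inj; rewrite /= !fv // ?bN_add //.
  exact: (dsD hM.1).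
have c3 : forall s r n, SG 1%g r -> MG g n -> f (s * r) n = f s (r *: n).
  by move=> s r n hr hn; rewrite /f b_bal.
have [phi [phiD phib]] := hI.2.2.2.2.1 _ f c1 c2 c3.
have e : forall t, spanval (phi t) = t.
  apply: (hI.2.2.2.2.2 _ (fun t => spanval (phi t)) id).
  - by move=> x y; rewrite phiD.
  - by [].
  - by move=> s n hn; rewrite /= phib //; exact: (fv _ _ hn).
have := valP (phi t); rewrite /= e => /asboolP[lx [hx ex]].
have [l [hl el]] := ind_gen_list hx.
by exists l; split => //; rewrite ex.
Qed.
End IndSec.

Section Shift.
Variables (G : groupType) (S : pzRingType) (SG : G -> S -> Prop).
Variables (X : lmodType S) (XG : G -> X -> Prop).

Lemma shift_graded (c : G) : graded_module SG XG -> graded_module SG (fun k => XG (k * c)%g).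
Proof.
move=> [[h1 [h2 h3]] h4]; split; last first.
  by move=> l h s x hs hx; rewrite -mulgA; apply: h4.
split; first by move=> k; apply: h1.
split.
  move=> v; have [l [hl el]] := h2 v.
  exists [seq ((p.1 * c^-1)%g, p.2) | p <- l]; split; last by rewrite big_map.
  by move=> p /mapP[q ql ->] /=; rewrite mulgVK; apply: hl.
move=> l ul hl sl p pl.
have := h3 [seq ((q.1 * c)%g, q.2) | q <- l] _ _ _ ((p.1 * c)%g, p.2); apply.
- by rewrite -map_comp (map_comp (fun k => (k * c)%g) fst) map_inj_uniq //; apply: mulIg.
- by move=> q /mapP[r rl ->] /=; apply: hl.
- by rewrite big_map.
- by apply/mapP; exists p.
Qed.
End Shift.

Section Eps.
Variables (G : groupType) (S : pzRingType) (SG : G -> S -> Prop).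
Hypothesis hgr : graded_ring SG.
Variable eps : G -> S.
Hypothesis heps : forall g, ideal_gginv SG g (eps g) /\
    (forall x, ideal_gginv SG g x -> eps g * x = x /\ x * eps g = x) /\
    (forall s, SG g s -> eps g * s = s /\ s * eps (g^-1)%g = s).

Lemma ideal_hom k z : ideal_gginv SG k z -> SG 1%g z.
Proof.
move=> [l [hl ->]]; apply: (ds_sum hgr.1) => p pl _.
rewrite -(mulgV k); apply: hgr.2; [exact: (hl p pl).1 | exact: (hl p pl).2].
Qed.

Lemma eps_hom k : SG 1%g (eps k). Proof. exact: ideal_hom (heps k).1. Qed.
Lemma eps_left k s : SG k s -> eps k * s = s. Proof. by move=> h; apply: ((heps k).2.2 s h).1. Qed.
Lemma eps_right k s : SG (k^-1)%g s -> s * eps k = s.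
Proof. by move=> h; have := ((heps (k^-1)%g).2.2 s h).2; rewrite invgK. Qed.
End Eps.

Section Part2.
Variables (G : groupType) (S : pzRingType) (SG : G -> S -> Prop).
Hypothesis hgr : graded_ring SG.
Variable eps : G -> S.
Hypothesis heps : forall g, ideal_gginv SG g (eps g) /\
    (forall x, ideal_gginv SG g x -> eps g * x = x /\ x * eps g = x) /\
    (forall s, SG g s -> eps g * s = s /\ s * eps (g^-1)%g = s).
Variables (M : lmodType S) (MG : G -> M -> Prop) (hM : graded_module SG MG) (g : G).

Definition annN (x : M) := exists l : seq (G * M),
  (forall p, p \in l -> MG p.1 p.2 /\ (forall s, SG (g * p.1^-1)%g s -> s *: p.2 = 0)) /\
  x = \sum_(p <- l) p.2.

Lemma annN_sub : graded_submodule MG annN.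
Proof.
split; first by exists [::]; rewrite big_nil.
split.
  move=> x y [l1 [h1 e1]] [l2 [h2 e2]].
  exists (l1 ++ [seq (p.1, - p.2) | p <- l2]); split; last by rewrite big_cat big_map e1 e2 sumrN.
  move=> p; rewrite mem_cat => /orP[/h1 //|/mapP[q /h2 [q1 q2] ->]] /=; split.
    exact: (dsN hM.1).
  by move=> s hs; rewrite scalerN q2 ?oppr0.
split.
  move=> s x [l [hl el]].
  exists [seq ((q.1 * p.1)%g, q.2 *: p.2) | p <- l, q <- dsdec SG s]; split.
    move=> p /allpairsP[[a b] [al bd ->]] /=; have [ha1 ha2] := hl a al.
    have hb := (dsdecP hgr.1 s).1 b bd.
    split; first exact: hM.2.
    move=> u hu; rewrite scalerA; apply: ha2.
    have -> : (g * a.1^-1)%g = (g * (b.1 * a.1)^-1 * b.1)%g by rewrite invgM !mulgA mulgVK.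
    exact: hgr.2.
  rewrite big_allpairs_dep /= el scaler_sumr; apply: eq_bigr => p _.
  by rewrite {1}(dsdecP hgr.1 s).2 scaler_suml.
move=> x [l [hl el]]; exists [seq (p.1, p.2) | p <- l]; split; last by rewrite big_map.
move=> p /mapP[q ql ->] /=; split; first exact: (hl q ql).1.
by exists [:: q]; split; [move=> r; rewrite inE => /eqP->; exact: hl | rewrite big_cons big_nil addr0].
Qed.

Lemma annN_Cg : in_Cg MG g annN.
Proof.
split; first exact: annN_sub.
move=> x [l [hl el]] hx.
have -> : x = dsproj MG g x by rewrite (proj_in hM.1 g hx) eqxx.
rewrite (proj_spec hM.1 g _ el); last by move=> p /hl[].
apply: big1_seq => p /andP[/eqP p1 pl]; have [_ h2] := hl p pl.
by rewrite -[p.2]scale1r h2 // p1 mulgV; apply: one_hom.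
Qed.

Hypothesis htf : Cg_torsion_free MG g.

Lemma tf_eps k x : MG (k * g)%g x -> x = eps k *: x.
Proof.
move=> hx; apply/eqP; rewrite -subr_eq0; apply/eqP; apply: htf.
exists [:: x - eps k *: x]; split; last by rewrite big_cons big_nil addr0.
move=> y; rewrite inE => /eqP->; exists annN; split; first exact: annN_Cg.
exists [:: ((k * g)%g, x - eps k *: x)]; split; last by rewrite big_cons big_nil addr0.
move=> p; rewrite inE => /eqP-> /=; split.
  apply: (dsB hM.1) => //; rewrite -[(k * g)%g]mul1g; apply: (hM.2 1%g) => //; exact: (eps_hom hgr heps).
move=> s; rewrite invgM mulgA mulgV mul1g => hs.
by rewrite scalerBr scalerA (eps_right heps) // subrr.
Qed.
End Part2.

Section Part2b.
Variables (G : groupType) (S : pzRingType) (SG : G -> S -> Prop).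
Hypothesis hgr : graded_ring SG.
Variable eps : G -> S.
Hypothesis heps : forall g, ideal_gginv SG g (eps g) /\
    (forall x, ideal_gginv SG g x -> eps g * x = x /\ x * eps g = x) /\
    (forall s, SG g s -> eps g * s = s /\ s * eps (g^-1)%g = s).
Variables (M : lmodType S) (MG : G -> M -> Prop) (hM : graded_module SG MG) (g : G).
Variables (T : lmodType S) (beta : S -> M -> T) (hI : is_Ind SG MG g beta).
Variable io : T -> M.
Hypothesis ioD : forall t t', io (t + t') = io t + io t'.
Hypothesis iob : forall s n, MG g n -> io (beta s n) = s *: n.

Notation IG := (Ind_grading SG MG g beta).

Lemma io_lin s t : io (s *: t) = s *: io t.
Proof.
apply: (hI.2.2.2.2.2 _ (fun t => io (s *: t)) (fun t => s *: io t)).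
- by move=> x y; rewrite scalerDr ioD.
- by move=> x y; rewrite ioD scalerDr.
- by move=> s' n hn; rewrite (b_scale hI) // !iob // scalerA.
Qed.

Lemma IG0 k : IG k 0. Proof. by exists [::]; rewrite big_nil. Qed.
Lemma IGD k x y : IG k x -> IG k y -> IG k (x + y).
Proof.
move=> [l1 [h1 e1]] [l2 [h2 e2]]; exists (l1 ++ l2); split; last by rewrite big_cat e1 e2.
by move=> p; rewrite mem_cat => /orP[/h1|/h2].
Qed.
Lemma IG_sum k (I : eqType) (r : seq I) (P : pred I) (F : I -> T) :
  (forall i, i \in r -> P i -> IG k (F i)) -> IG k (\sum_(i <- r | P i) F i).
Proof.
move=> h; rewrite big_seq_cond; apply: (big_ind (IG k)); [exact: IG0 | exact: IGD |].
by move=> i /andP[]; apply: h.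
Qed.

Lemma io_hom k t : IG k t -> MG (k * g)%g (io t).
Proof.
move=> [l [hl ->]]; rewrite (additive_sum (Phi := io)) //.
apply: (ds_sum hM.1) => p pl _; rewrite iob; last exact: (hl p pl).2.
by apply: hM.2; [exact: (hl p pl).1 | exact: (hl p pl).2].
Qed.

Lemma io_zero_hom k t : IG k t -> io t = 0 -> t = 0.
Proof.
move=> [l [hl el]] hz.
have hio : io t = \sum_(p <- l) p.1 *: p.2.
  rewrite el (additive_sum (Phi := io)) //; apply: eq_big_seq => p pl; apply: iob.
  exact: (hl p pl).2.
have et : t = eps k *: t.
  rewrite {2}el scaler_sumr {1}el; apply: eq_big_seq => p pl.
  by rewrite (b_scale hI) ?(eps_left heps) //; [exact: (hl p pl).1 | exact: (hl p pl).2].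
have [le [hle ee]] := (heps k).1.
rewrite et ee scaler_suml big1_seq // => q /andP[_ ql]; rewrite -scalerA.
suff -> : q.2 *: t = 0 by rewrite scaler0.
have hq := hle q ql.
rewrite el scaler_sumr.
transitivity (beta 1 (\sum_(p <- l) (q.2 * p.1) *: p.2)); last first.
  rewrite (eq_bigr (fun p => q.2 *: (p.1 *: p.2))); last by move=> p _; rewrite scalerA.
  by rewrite -scaler_sumr -hio hz scaler0 (bs0 hM hI).
rewrite (b_sumN hM hI); last first.
  move=> p pl; rewrite -[g]mul1g; apply: hM.2; last exact: (hl p pl).2.
  rewrite -(mulVg k); apply: hgr.2; [exact: hq.2 | exact: (hl p pl).1].
apply: eq_big_seq => p pl; rewrite (b_scale hI); last exact: (hl p pl).2.
rewrite -{1}[q.2 * p.1]mul1r (b_bal hI) //; last exact: (hl p pl).2.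
rewrite -(mulVg k); apply: hgr.2; [exact: hq.2 | exact: (hl p pl).1].
Qed.
Lemma io_inj t t' : io t = io t' -> t = t'.
Proof.
move=> e; apply/eqP; rewrite -subr_eq0; apply/eqP.
have : io (t - t') = 0 by rewrite (additiveB _ _ ioD) e subrr.
move: (t - t') => u hz.
have [l [hl el]] := ind_gen hM hI u.
pose L2 := [seq (q.1, beta q.2 p.2) | p <- l, q <- dsdec SG p.1].
have hL2 : forall x, x \in L2 -> IG x.1 x.2.
  move=> x /allpairsPdep[p [q [pl qd ->]]] /=; exists [:: (q.2, p.2)]; split.
    move=> r; rewrite inE => /eqP-> /=; split; [exact: (dsdecP hgr.1 p.1).1 q qd | exact: hl].
  by rewrite big_cons big_nil addr0.
have eu : u = \sum_(x <- L2) x.2.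
  rewrite big_allpairs_dep /= el; apply: eq_big_seq => p pl.
  by rewrite {1}(dsdecP hgr.1 p.1).2 (b_sumS hI) //; exact: hl.
have comp : forall k, \sum_(x <- L2 | x.1 == k) x.2 = 0.
  move=> k; apply: (io_zero_hom (k := k)); first by apply: IG_sum => x xl /eqP <-; exact: hL2.
  have h1 : forall p, p \in [seq ((x.1 * g)%g, io x.2) | x <- L2] -> MG p.1 p.2.
    by move=> p /mapP[x xl ->] /=; exact: io_hom (hL2 x xl).
  have h2 : \sum_(p <- [seq ((x.1 * g)%g, io x.2) | x <- L2]) p.2 = 0.
    by rewrite big_map -(additive_sum (Phi := io)) // -eu hz.
  have := ds_comp hM.1 h1 h2 (k * g)%g.
  rewrite big_map (eq_bigl (fun x => x.1 == k)); last by move=> x /=; apply/eqP/eqP => [/mulIg|->].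
  by rewrite -big_filter -(additive_sum (Phi := io)) // big_filter.
by rewrite eu -(big_regroup fst (fun x => x.2)) big1 // => k _; exact: comp k.
Qed.

Hypothesis htf : Cg_torsion_free MG g.

Lemma io_onto_hom k y : MG (k * g)%g y -> exists t, IG k t /\ io t = y.
Proof.
move=> hy; have ey := tf_eps hgr heps hM htf hy.
have [le [hle ee]] := (heps k).1.
have hq : forall q, q \in le -> MG g (q.2 *: y).
  by move=> q ql; have := hM.2 _ _ _ _ (hle q ql).2 hy; rewrite mulKg.
exists (\sum_(q <- le) beta q.1 (q.2 *: y)); split.
  exists [seq (q.1, q.2 *: y) | q <- le]; split; last by rewrite big_map.
  by move=> p /mapP[q ql ->] /=; split; [exact: (hle q ql).1 | exact: hq].
rewrite (additive_sum (Phi := io)) // {2}ey ee scaler_suml; apply: eq_big_seq => q ql.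
by rewrite iob ?scalerA //; exact: hq.
Qed.

Lemma io_onto y : exists t, io t = y.
Proof.
have [hd ed] := dsdecP hM.1 y.
suff : exists t, io t = \sum_(p <- dsdec MG y) p.2 by rewrite -ed.
elim: (dsdec MG y) hd => [|a l IH] h.
  by exists 0; rewrite big_nil (additive0 ioD).
have [t1 e1] : exists t, io t = \sum_(p <- l) p.2.
  by apply: IH => p pl; apply: h; rewrite inE pl orbT.
have ha : MG ((a.1 * g^-1) * g)%g a.2 by rewrite mulgVK; apply: h; rewrite inE eqxx.
have [t2 [_ e2]] := io_onto_hom ha.
by exists (t2 + t1); rewrite ioD e1 e2 big_cons.
Qed.
End Part2b.

Lemma part2 (G : groupType) (S : pzRingType) (SG : G -> S -> Prop) (g : G)
  (hgr : graded_ring SG) (eps : G -> S)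
  (heps : forall g, ideal_gginv SG g (eps g) /\
    (forall x, ideal_gginv SG g x -> eps g * x = x /\ x * eps g = x) /\
    (forall s, SG g s -> eps g * s = s /\ s * eps (g^-1)%g = s)) :
  forall (M : lmodType S) (MG : G -> M -> Prop),
     graded_module SG MG -> gr_injective SG MG -> Cg_torsion_free MG g ->
     forall (T : lmodType S) (beta : S -> M -> T), is_Ind SG MG g beta ->
       gr_injective SG (Ind_grading SG MG g beta).
Proof.
move=> M MG hM hinj htf T beta hI A B AG BG hA hB i [iL iG] iinj f [fL fG].
have [io [ioD iob]] := hI.2.2.2.2.1 M (fun s n => s *: n)
  (fun s s' n _ => ltac:(by rewrite /= scalerDl)) (fun s n n' _ _ => ltac:(by rewrite /= scalerDr))
  (fun s r n _ _ => ltac:(by rewrite /= scalerA)).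
have hiM : gr_morphism (fun k => AG (k * g^-1)%g) (fun k => BG (k * g^-1)%g) i.
  split; first exact: iL.
  by move=> k x hx; exact: iG.
have hfM : gr_morphism (fun k => AG (k * g^-1)%g) MG (fun a => io (f a)).
  split.
    by move=> s x y; rewrite fL ioD (io_lin hI ioD iob).
  by move=> k x hx; have := io_hom hM ioD iob (fG _ _ hx); rewrite mulgVK.
have := hinj A B (fun k => AG (k * g^-1)%g) (fun k => BG (k * g^-1)%g)
  (shift_graded _ hA) (shift_graded _ hB) i hiM iinj (fun a => io (f a)) hfM.
case=> H [[HL HG] Hi].
pose inv y := epsilon (inhabits 0) (fun t => io t = y).
have invE : forall y, io (inv y) = y.
  by move=> y; exact: (epsilon_spec _ _ (io_onto hgr heps hM ioD iob htf y)).
have ioI := io_inj hgr heps hM hI ioD iob.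
exists (fun b => inv (H b)); split; [split|].
- by move=> s x y; apply: ioI; rewrite invE ioD (io_lin hI ioD iob) !invE HL.
- move=> k x hx.
  have hHx : MG (k * g)%g (H x) by apply: HG; rewrite mulgK.
  have [t [ht et]] := io_onto_hom hgr heps hM ioD iob htf hHx.
  suff -> : inv (H x) = t by [].
  by apply: ioI; rewrite invE et.
- by move=> a; apply: ioI; rewrite invE Hi.
Qed.

Lemma sub_sum (V : zmodType) (N : V -> Prop) (I : eqType) (r : seq I) (P : pred I) (F : I -> V) :
  N 0 -> (forall x y, N x -> N y -> N (x - y)) ->
  (forall i, i \in r -> P i -> N (F i)) -> N (\sum_(i <- r | P i) F i).
Proof.
move=> h0 hB h; rewrite big_seq_cond; apply: (big_ind N) => //.
  move=> x y hx hy; have e : x + y = x - (0 - y) by rewrite sub0r opprK.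
  by rewrite e; apply: (hB) => //; apply: (hB).
by move=> i /andP[]; apply: h.
Qed.

Section Part1.
Variables (G : groupType) (S : pzRingType) (SG : G -> S -> Prop).
Hypothesis hgr : graded_ring SG.
Variable eps : G -> S.
Hypothesis heps : forall g, ideal_gginv SG g (eps g) /\
    (forall x, ideal_gginv SG g x -> eps g * x = x /\ x * eps g = x) /\
    (forall s, SG g s -> eps g * s = s /\ s * eps (g^-1)%g = s).
Variables (M : lmodType S) (MG : G -> M -> Prop) (hM : graded_module SG MG) (g : G).
Variables (T : lmodType S) (beta : S -> M -> T) (hI : is_Ind SG MG g beta).
Notation IG := (Ind_grading SG MG g beta).

Lemma ind_hom_decomp k u : IG k u -> exists le : seq (S * S),
  (forall q, q \in le -> exists m, MG g m /\ q.2 *: u = beta 1 m) /\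
  u = \sum_(q <- le) q.1 *: (q.2 *: u).
Proof.
move=> [l [hl el]].
have et : u = eps k *: u.
  rewrite {2}el scaler_sumr {1}el; apply: eq_big_seq => p pl.
  by rewrite (b_scale hI) ?(eps_left heps) //; [exact: (hl p pl).1 | exact: (hl p pl).2].
have [le [hle ee]] := (heps k).1.
exists le; split; last by rewrite {1}et ee scaler_suml; apply: eq_bigr => q _; rewrite scalerA.
move=> q ql; have hq := hle q ql.
have hm : forall p, p \in l -> MG g ((q.2 * p.1) *: p.2).
  move=> p pl; rewrite -[g]mul1g; apply: hM.2; last exact: (hl p pl).2.
  rewrite -(mulVg k); apply: hgr.2; [exact: hq.2 | exact: (hl p pl).1].
exists (\sum_(p <- l) (q.2 * p.1) *: p.2); split.
  by apply: (ds_sum hM.1) => p pl _; exact: hm.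
rewrite el scaler_sumr (b_sumN hM hI) //; apply: eq_big_seq => p pl.
rewrite (b_scale hI); last exact: (hl p pl).2.
rewrite -{1}[q.2 * p.1]mul1r (b_bal hI) //; last exact: (hl p pl).2.
rewrite -(mulVg k); apply: hgr.2; [exact: hq.2 | exact: (hl p pl).1].
Qed.

End Part1.

Lemma part1 (G : groupType) (S : pzRingType) (SG : G -> S -> Prop) (g : G)
  (hgr : graded_ring SG) (eps : G -> S)
  (heps : forall g, ideal_gginv SG g (eps g) /\
    (forall x, ideal_gginv SG g x -> eps g * x = x /\ x * eps g = x) /\
    (forall s, SG g s -> eps g * s = s /\ s * eps (g^-1)%g = s)) :
  forall (M : lmodType S) (MG : G -> M -> Prop),
     graded_module SG MG -> gr_simple MG ->
     forall (T : lmodType S) (beta : S -> M -> T), is_Ind SG MG g beta ->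
       gr_simple (Ind_grading SG MG g beta).
Proof.
move=> M MG hM hsimp T beta hI N [N0 [NB [NS Ndec]]].
have NsumP : forall (I : eqType) (r : seq I) (P : pred I) (F : I -> T),
    (forall i, i \in r -> P i -> N (F i)) -> N (\sum_(i <- r | P i) F i).
  by move=> I r P F h; apply: sub_sum.
pose P m := MG g m /\ N (beta 1 m).
pose SP x := exists l : seq (S * M), (forall p, p \in l -> P p.2) /\ x = \sum_(p <- l) p.1 *: p.2.
have hSP : graded_submodule MG SP.
  split; first by exists [::]; rewrite big_nil.
  split.
    move=> x y [l1 [h1 e1]] [l2 [h2 e2]].
    exists (l1 ++ [seq (- p.1, p.2) | p <- l2]); split.
      by move=> p; rewrite mem_cat => /orP[/h1 //|/mapP[q /h2 q2 ->]].
    rewrite big_cat big_map e1 e2 -sumrN; congr (_ + _); apply: eq_bigr => p _.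
    by rewrite scaleNr.
  split.
    move=> s x [l [hl el]]; exists [seq (s * p.1, p.2) | p <- l]; split.
      by move=> p /mapP[q ql ->] /=; exact: (hl q ql).
    by rewrite el scaler_sumr big_map; apply: eq_bigr => p _; rewrite scalerA.
  move=> x [l [hl el]].
  exists [seq ((q.1 * g)%g, q.2 *: p.2) | p <- l, q <- dsdec SG p.1]; split.
    move=> x' /allpairsPdep[p [q [pl qd ->]]] /=; split.
      by apply: hM.2; [exact: (dsdecP hgr.1 p.1).1 | exact: (hl p pl).1].
    by exists [:: (q.2, p.2)]; split; [move=> r; rewrite inE => /eqP->; exact: (hl p pl) | rewrite big_cons big_nil addr0].
  rewrite big_allpairs_dep /= el; apply: eq_big_seq => p pl.
  by rewrite {1}(dsdecP hgr.1 p.1).2 scaler_suml.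
have [SP0|SPall] := hsimp SP hSP.
  left => t /Ndec[l [hl ->]]; apply: big1_seq => p /andP[_ pl].
  have [hp1 hp2] := hl p pl.
  have [le [hle ->]] := ind_hom_decomp hgr heps hM hI hp1.
  apply: big1_seq => q /andP[_ ql]; have [m [hm em]] := hle q ql.
  have Pm : P m by split => //; rewrite -em; exact: NS.
  rewrite em; have -> : m = 0.
    by apply: SP0; exists [:: (1, m)]; split; [move=> r; rewrite inE => /eqP-> | rewrite big_cons big_nil addr0 scale1r].
  by rewrite (bs0 hM hI) scaler0.
right.
have Nb1 : forall m, MG g m -> N (beta 1 m).
  move=> m hm; have [l [hl el]] := SPall m.
  pose L := [seq ((q.1 * g)%g, q.2 *: p.2) | p <- l, q <- dsdec SG p.1].
  have hL : forall x, x \in L -> MG x.1 x.2.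
    move=> x' /allpairsPdep[p [q [pl qd ->]]] /=.
    by apply: hM.2; [exact: (dsdecP hgr.1 p.1).1 | exact: (hl p pl).1].
  have eL : m = \sum_(x <- L) x.2.
    rewrite big_allpairs_dep /= el; apply: eq_big_seq => p pl.
    by rewrite {1}(dsdecP hgr.1 p.1).2 scaler_suml.
  have e1 : dsproj MG g m = m by rewrite (proj_in hM.1 g hm) eqxx.
  rewrite -e1 (proj_spec hM.1 g hL eL) -big_filter (b_sumN hM hI); last first.
    by move=> x; rewrite mem_filter => /andP[/eqP <- /hL].
  apply: NsumP => x; rewrite mem_filter => /andP[/eqP x1 xL] _.
  move: xL x1 => /allpairsPdep[p [q [pl qd ->]]] /= e.
  have q1 : q.1 = 1%g by apply: (mulIg g); rewrite mul1g.
  have hq : SG 1%g q.2 by rewrite -q1; exact: (dsdecP hgr.1 p.1).1 q qd.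
  rewrite -(b_bal hI) //; last exact: (hl p pl).1.
  rewrite mul1r -[q.2]mulr1 -(b_scale hI); last exact: (hl p pl).1.
  by apply: NS; exact: (hl p pl).2.
have Nb : forall s m, MG g m -> N (beta s m).
  by move=> s m hm; rewrite -[s]mulr1 -(b_scale hI) //; apply: NS; exact: Nb1.
move=> t; have [l [hl ->]] := ind_gen hM hI t.
by apply: NsumP => p pl _; exact: Nb _ _ (hl p pl).
Qed.


Lemma uniq_fst_eq (K V : eqType) (l : seq (K * V)) p q :
  uniq (map fst l) -> p \in l -> q \in l -> p.1 = q.1 -> p = q.
Proof.
elim: l => [|a l IH] //= /andP[na ul]; rewrite !inE.
case/orP=> [/eqP->|pl]; case/orP=> [/eqP->|ql] e //.
- by move: na; rewrite e map_f.
- by move: na; rewrite -e map_f.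
- exact: IH.
Qed.

Lemma sum_single (W : zmodType) (K V : eqType) (F : K * V -> W) (l : seq (K * V)) p :
  uniq (map fst l) -> p \in l -> (forall m, m \in l -> m.1 != p.1 -> F m = 0) ->
  \sum_(m <- l) F m = F p.
Proof.
move=> ul pl h; rewrite (bigD1_seq p) //= ?(map_uniq ul) // big1_seq ?addr0 //.
move=> m /andP[mp ml]; apply: h => //; apply: contra mp => /eqP e.
by apply/eqP; apply: (uniq_fst_eq ul).
Qed.

Section Coind.
Variables (G : groupType) (S : pzRingType) (SG : G -> S -> Prop) (A : zmodType) (act : S -> A -> A).

Definition CoP (f : S -> A) : Prop :=
  (forall t u, f (t + u) = f t + f u) /\
  (forall r t, SG 1%g r -> f (r * t) = act r (f t)) /\
  (exists L : seq G, forall j t, j \notin L -> SG j t -> f t = 0).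

Definition coP (_ : R_module SG act) (_ : graded_ring SG) : {pred (S -> A)} :=
  fun f => `[< CoP f >].

Variables (hA : R_module SG act) (hgr : graded_ring SG).
Local Notation cp := (coP hA hgr).

Lemma act0 r : SG 1%g r -> act r 0 = 0.
Proof.
move=> hr; have := (@hA r r 0 0 hr hr).1; rewrite addr0 => h.
by apply: (addrI (act r 0)); rewrite -h addr0.
Qed.
Lemma actD r x y : SG 1%g r -> act r (x + y) = act r x + act r y.
Proof. by move=> hr; exact: (@hA r r x y hr hr).1. Qed.
Lemma actB r x y : SG 1%g r -> act r (x - y) = act r x - act r y.
Proof.
move=> hr; rewrite actD //; congr (_ + _); apply: (addrI (act r y)).
by rewrite -actD // !subrr act0.
Qed.

Lemma coP_zmod : GRing.zmod_closed cp.
Proof.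
split.
  apply/asboolP; split; first by move=> t u /=; rewrite addr0.
  split; first by move=> r t hr /=; rewrite act0.
  by exists [::].
move=> f h /asboolP[fD [fR [Lf hLf]]] /asboolP[hD [hR [Lh hLh]]]; apply/asboolP.
have E : forall x, (f - h) x = f x - h x by [].
split; first by move=> t u; rewrite !E fD hD opprD addrACA.
split; first by move=> r t hr; rewrite !E fR // hR // actB.
exists (Lf ++ Lh) => j t; rewrite mem_cat negb_or => /andP[jf jh] ht.
by rewrite E (hLf j) // (hLh j) // subrr.
Qed.
HB.instance Definition _ := GRing.isZmodClosed.Build (S -> A) cp coP_zmod.

Inductive coind : Type := Coind (f : S -> A) of f \in cp.
Definition cval (x : coind) := let: Coind f _ := x in f.
HB.instance Definition _ := [isSub of coind for cval].
HB.instance Definition _ := [Choice of coind by <:].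
HB.instance Definition _ := [SubChoice_isSubZmodule of coind by <:].

Lemma cvalP (x : coind) : CoP (cval x).
Proof. by case: x => f /= /asboolP. Qed.

Lemma cscale_in (s : S) (x : coind) : (fun t => cval x (t * s)) \in cp.
Proof.
have [fD [fR [L hL]]] := cvalP x; apply/asboolP.
split; first by move=> t u; rewrite mulrDl fD.
split; first by move=> r t hr; rewrite -mulrA fR.
exists [seq (k * d^-1)%g | k <- L, d <- map fst (dsdec SG s)] => j t hj ht.
rewrite {1}(dsdecP hgr.1 s).2 mulr_sumr (additive_sum (Phi := cval x)) //.
apply: big1_seq => q /andP[_ qd]; apply: (hL (j * q.1)%g).
  apply: contra hj => hjq; rewrite -[j](mulgK q.1); apply: allpairs_f => //.
  exact: map_f.
exact: hgr.2 _ _ _ _ ht ((dsdecP hgr.1 s).1 q qd).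
Qed.

Definition cscale (s : S) (x : coind) : coind := Coind (cscale_in s x).

Lemma cval_scale s x t : cval (cscale s x) t = cval x (t * s). Proof. by []. Qed.

Lemma cval_inj : injective cval. Proof. exact: val_inj. Qed.

Lemma cvalD (x y : coind) t : cval (x + y) t = cval x t + cval y t. Proof. by []. Qed.

Lemma cscaleA a b v : cscale a (cscale b v) = cscale (a * b) v.
Proof. by apply: cval_inj; apply: funext => t /=; rewrite mulrA. Qed.
Lemma cscale1 : left_id 1 cscale.
Proof. by move=> v; apply: cval_inj; apply: funext => t /=; rewrite mulr1. Qed.
Lemma cscaleDr : right_distributive cscale +%R.
Proof. by move=> a u v; apply: cval_inj; apply: funext => t /=. Qed.
Lemma cscaleDl v : {morph cscale^~ v: a b / a + b}.
Proof.
move=> a b; apply: cval_inj; apply: funext => t /=.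
by rewrite mulrDr (cvalP v).1.
Qed.
HB.instance Definition _ := GRing.Zmodule_isLmodule.Build S coind cscaleA cscale1 cscaleDr cscaleDl.


Lemma cval_sum (I : Type) (r : seq I) (F : I -> coind) t :
  cval (\sum_(i <- r) F i) t = \sum_(i <- r) cval (F i) t.
Proof.
elim: r => [|a r IH]; first by rewrite !big_nil.
by rewrite !big_cons cvalD IH.
Qed.

Lemma cval0 t : cval 0 t = 0. Proof. by []. Qed.
Lemma cvalB (x y : coind) t : cval (x - y) t = cval x t - cval y t. Proof. by []. Qed.

Definition CG (g h : G) (x : coind) :=
  forall j t, j != (g * h^-1)%g -> SG j t -> cval x t = 0.

Lemma proj_mull r k t : SG 1%g r -> dsproj SG k (r * t) = r * dsproj SG k t.
Proof.
move=> hr; have := @proj_morph _ _ _ _ _ hgr.1 hgr.1 (fun j => (1 * j)%g) (fun t => r * t)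
  (mulgI 1%g) (fun x y => mulrDr r x y) (fun j x hx => hgr.2 _ _ _ _ hr hx) k t.
by rewrite mul1g.
Qed.

Lemma projcomp_in (x : coind) k : (fun t => cval x (dsproj SG k t)) \in cp.
Proof.
have [fD [fR _]] := cvalP x; apply/asboolP; split.
  by move=> t u; rewrite (projD hgr.1) fD.
split; first by move=> r t hr; rewrite proj_mull // fR.
exists [:: k] => j t; rewrite inE => hj ht.
by rewrite (proj_in hgr.1 k ht) (negbTE hj) (additive0 fD).
Qed.

Lemma coind_graded g : graded_module SG (CG g).
Proof.
split; last first.
  move=> l h s x hs hx j t hj ht; rewrite cval_scale; apply: (hx (j * l)%g).
    apply: contra hj => /eqP e; apply/eqP.
    by rewrite -[j](mulgK l) e invgM !mulgA.
  exact: hgr.2.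
split.
  move=> k; split; first by move=> j t _ _; rewrite cval0.
  by move=> x y hx hy j t hj ht; rewrite cvalB (hx j) // (hy j) // subrr.
split.
  move=> x; have [fD [fR [L hL]]] := cvalP x.
  pose y k : coind := Coind (projcomp_in x k).
  exists [seq ((k^-1 * g)%g, y k) | k <- undup L]; split.
    move=> q /mapP[k _ ->] j t /=; rewrite invgM invgK mulgA mulgV mul1g => hj ht.
    by rewrite /= (proj_in hgr.1 k ht) (negbTE hj) (additive0 fD).
  apply: cval_inj; apply: funext => t; rewrite big_map cval_sum /=.
  apply: (sum_proj_fun hgr.1 (Phi := cval x)); first exact: undup_uniq.
    exact: fD.
  by move=> j u; rewrite mem_undup; apply: hL.
move=> l ul hl hs q ql; apply: cval_inj; apply: funext => t; rewrite cval0.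
set k := (g * q.1^-1)%g.
have hq := hl q ql.
have -> : cval q.2 t = cval q.2 (dsproj SG k t).
  apply: (proj_fun hgr.1) => [x y|j x]; first exact: (cvalP q.2).1.
  exact: hq.
have h0 : \sum_(p <- l) cval p.2 (dsproj SG k t) = 0 by rewrite -cval_sum hs.
rewrite -[RHS]h0 (sum_single (F := fun m => cval m.2 (dsproj SG k t)) ul ql) // => m ml hm.
apply: (hl m ml) (proj_hom hgr.1 k t); apply: contra hm => /eqP e.
by apply/eqP; apply: invg_inj; apply: (mulgI g); rewrite -e.
Qed.

End Coind.

Section Part3.
Variables (G : groupType) (S : pzRingType) (SG : G -> S -> Prop).
Hypothesis hgr : graded_ring SG.
Variable eps : G -> S.
Hypothesis heps : forall g, ideal_gginv SG g (eps g) /\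
    (forall x, ideal_gginv SG g x -> eps g * x = x /\ x * eps g = x) /\
    (forall s, SG g s -> eps g * s = s /\ s * eps (g^-1)%g = s).
Variables (A B : zmodType) (actA : S -> A -> A) (actB : S -> B -> B).
Hypotheses (hA : R_module SG actA) (hB : R_module SG actB).
Variable p : A -> B.
Hypothesis hpL : R_linear SG actA actB p.
Hypothesis hpS : forall b, exists a, p a = b.

Lemma act1 (V : zmodType) (act : S -> V -> V) : R_module SG act -> forall x, act 1 x = x.
Proof. by move=> h x; have o := one_hom hgr; exact: (@h 1 1 x x o o).2.2.2. Qed.

Lemma act0l (V : zmodType) (act : S -> V -> V) : R_module SG act -> forall x, act 0 x = 0.
Proof.
move=> h x; have o := ds0 hgr.1 1%g; have := (@h 0 0 x x o o).2.1; rewrite addr0 => e.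
by apply: (addrI (act 0 x)); rewrite -e addr0.
Qed.

Lemma pD x y : p (x + y) = p x + p y.
Proof. by have := @hpL 1 x y (one_hom hgr); rewrite !act1. Qed.

Lemma pR r x : SG 1%g r -> p (actA r x) = actB r (p x).
Proof. by move=> hr; have := @hpL r x 0 hr; rewrite addr0 (additive0 pD) addr0. Qed.

Lemma P_in (x : coind hA hgr) : (fun t => p (cval x t)) \in coP hB hgr.
Proof.
have [fD [fR [L hL]]] := cvalP x; apply/asboolP; split.
  by move=> t u; rewrite fD pD.
split; first by move=> r t hr; rewrite fR // pR.
by exists L => j t hj ht; rewrite (hL j) // (additive0 pD).
Qed.

Definition Pm (x : coind hA hgr) : coind hB hgr := Coind (P_in x).

Lemma Pm_onto_hom (y : coind hB hgr) k : (forall j t, j != k -> SG j t -> cval y t = 0) ->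
  exists x : coind hA hgr, (forall j t, j != k -> SG j t -> cval x t = 0) /\ Pm x = y.
Proof.
move=> hy.
have [le [hle ee]] := (heps (k^-1)%g).1.
pose a (b : B) := epsilon (inhabits 0) (fun a => p a = b).
have ha : forall b, p (a b) = b by move=> b; exact: (epsilon_spec _ _ (hpS b)).
pose Phi t := \sum_(q <- le) actA (dsproj SG k t * q.1) (a (cval y q.2)).
have hr : forall t q, q \in le -> SG 1%g (dsproj SG k t * q.1).
  move=> t q ql; rewrite -(mulgV k); apply: hgr.2; [exact: (proj_hom hgr.1) | exact: (hle q ql).1].
have Phi0 : forall j t, j != k -> SG j t -> Phi t = 0.
  move=> j t hj ht; rewrite /Phi big1 // => q _.
  by rewrite (proj_in hgr.1 k ht) (negbTE hj) mul0r; exact: act0l.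
have PhiP : Phi \in coP hA hgr.
  apply/asboolP; split.
    move=> t u; rewrite /Phi -big_split; apply: eq_big_seq => q ql /=.
    rewrite (projD hgr.1) mulrDl.
    exact: (@hA _ _ (a (cval y q.2)) (a (cval y q.2)) (hr t q ql) (hr u q ql)).2.1.
  split.
    move=> r t hr0; rewrite /Phi (additive_sum (Phi := actA r)); last first.
      by move=> x x'; exact: (@hA r r x x' hr0 hr0).1.
    apply: eq_big_seq => q ql; rewrite (proj_mull hgr) // -mulrA.
    exact: (@hA r _ (a (cval y q.2)) (a (cval y q.2)) hr0 (hr t q ql)).2.2.1.
  by exists [:: k] => j t; rewrite inE; exact: Phi0.
exists (Coind PhiP); split; first exact: Phi0.
apply: cval_inj; apply: funext => t /=.
rewrite (additive_sum (Phi := p)); last exact: pD.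
transitivity (\sum_(q <- le) cval y (dsproj SG k t * q.1 * q.2)).
  apply: eq_big_seq => q ql; rewrite pR ?ha; last exact: hr.
  by rewrite (cvalP y).2.1 //; exact: hr.
rewrite -(additive_sum (Phi := cval y)); last exact: (cvalP y).1.
rewrite (eq_bigr (fun q => dsproj SG k t * (q.1 * q.2))); last by move=> q _; rewrite mulrA.
rewrite -mulr_sumr -ee (eps_right heps); last by rewrite invgK; exact: (proj_hom hgr.1).
symmetry; apply: (proj_fun hgr.1); first exact: (cvalP y).1.
exact: hy.
Qed.

Lemma PmD x y : Pm (x + y) = Pm x + Pm y.
Proof. by apply: cval_inj; apply: funext => t /=; rewrite pD. Qed.

Lemma Pm_onto (g : G) (y : coind hB hgr) : exists x, Pm x = y.
Proof.
have [l [hl el]] := (coind_graded hB hgr g).1.2.1 y.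
rewrite el; elim: l hl {el} => [|q l IH] h.
  by exists 0; apply: cval_inj; apply: funext => t /=; rewrite big_nil; exact: (additive0 pD).
have [x1 e1] : exists x, Pm x = \sum_(p <- l) p.2.
  by apply: IH => r rl; apply: h; rewrite inE rl orbT.
have [x2 [_ e2]] := Pm_onto_hom (h q (mem_head _ _)).
by exists (x2 + x1); rewrite PmD e1 e2 big_cons.
Qed.

Lemma Pm_morph (g : G) : gr_morphism (@CG _ _ SG _ actA hA hgr g) (@CG _ _ SG _ actB hB hgr g) Pm.
Proof.
split.
  by move=> s x y; apply: cval_inj; apply: funext => t /=; rewrite pD.
by move=> h x hx j t hj ht /=; rewrite (hx j t hj ht) (additive0 pD).
Qed.

End Part3.

Section FSec.
Variables (G : groupType) (S : pzRingType) (SG : G -> S -> Prop).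
Hypothesis hgr : graded_ring SG.
Variables (B : zmodType) (actB : S -> B -> B) (hB : R_module SG actB).
Variables (M : lmodType S) (MG : G -> M -> Prop) (hM : graded_module SG MG) (g : G).
Variable f : M -> B.
Hypothesis hf : forall (r : S) x y, SG 1%g r -> MG g x -> MG g y ->
         f (r *: x + y) = actB r (f x) + f y.

Lemma fD x y : MG g x -> MG g y -> f (x + y) = f x + f y.
Proof. by move=> hx hy; have := @hf 1 x y (one_hom hgr) hx hy; rewrite scale1r (act1 hgr hB). Qed.
Lemma f0 : f 0 = 0.
Proof.
have h0 := ds0 hM.1 g; have := fD h0 h0; rewrite addr0 => e.
by apply: (addrI (f 0)); rewrite -e addr0.
Qed.
Lemma fR r x : SG 1%g r -> MG g x -> f (r *: x) = actB r (f x).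
Proof. by move=> hr hx; have := @hf r x 0 hr hx (ds0 hM.1 g); rewrite !addr0 f0 addr0. Qed.

Lemma projM_mull r k v : SG 1%g r -> dsproj MG k (r *: v) = r *: dsproj MG k v.
Proof.
move=> hr; have := @proj_morph _ _ _ _ _ hM.1 hM.1 (fun j => (1 * j)%g) (fun v => r *: v)
  (mulgI 1%g) (fun x y => scalerDr r x y) (fun j x hx => hM.2 _ _ _ _ hr hx) k v.
by rewrite mul1g.
Qed.

Lemma F_in x : (fun t => f (dsproj MG g (t *: x))) \in coP hB hgr.
Proof.
apply/asboolP; split.
  by move=> t u; rewrite scalerDl (projD hM.1) fD //; exact: (proj_hom hM.1).
split.
  by move=> r t hr; rewrite -scalerA projM_mull // fR //; exact: (proj_hom hM.1).
exists [seq (g * q.1^-1)%g | q <- dsdec MG x] => j t hj ht.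
rewrite {1}(dsdecP hM.1 x).2 scaler_sumr (proj_sum hM.1) big1_seq ?f0 // => q /andP[_ qd].
rewrite (proj_in hM.1 g (hM.2 _ _ _ _ ht ((dsdecP hM.1 x).1 q qd))).
case: eqP => // e; exfalso; move/negP: hj; apply.
rewrite -[j](mulgK q.1) e; exact: (map_f (fun q => (g * q.1^-1)%g) qd).
Qed.

Definition Fm x : coind hB hgr := Coind (F_in x).

Lemma Fm_morph : gr_morphism MG (@CG _ _ SG _ actB hB hgr g) Fm.
Proof.
split.
  move=> s x y; apply: cval_inj; apply: funext => t /=.
  rewrite scalerDr scalerA (projD hM.1) fD //; exact: (proj_hom hM.1).
move=> h x hx j t hj ht /=.
rewrite (proj_in hM.1 g (hM.2 _ _ _ _ ht hx)); case: eqP => [e|_]; last exact: f0.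
by move: hj; rewrite -e mulgK eqxx.
Qed.
End FSec.

Lemma part3 (G : groupType) (S : pzRingType) (SG : G -> S -> Prop) (g : G)
  (hgr : graded_ring SG) (eps : G -> S)
  (heps : forall g, ideal_gginv SG g (eps g) /\
    (forall x, ideal_gginv SG g x -> eps g * x = x /\ x * eps g = x) /\
    (forall s, SG g s -> eps g * s = s /\ s * eps (g^-1)%g = s)) :
  forall (M : lmodType S) (MG : G -> M -> Prop),
     graded_module SG MG -> gr_projective SG MG ->
     R_projective_component SG MG g.
Proof.
move=> M MG hM hproj A B actA actB hA hB p hpL hpS f hf.
have := hproj (coind hA hgr) (coind hB hgr) (@CG _ _ SG _ actA hA hgr g) (@CG _ _ SG _ actB hB hgr g)
  (coind_graded hA hgr g) (coind_graded hB hgr g) (Pm (hgr:=hgr) (hA:=hA) hB hpL)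
  (Pm_morph hgr hA hB hpL g) (Pm_onto (hgr:=hgr) heps hA (hB:=hB) hpL hpS g)
  (Fm hgr hB hM hf) (Fm_morph hgr hB hM hf).
case=> H [[HL HG] HP].
exists (fun x => cval (H x) 1); split.
  move=> r x y hr hx hy; rewrite HL cvalD cval_scale mul1r -{1}[r]mulr1.
  by rewrite (cvalP (H x)).2.1.
move=> x hx; have := congr1 (fun z => cval z 1) (HP x); rewrite /= => ->.
by rewrite scale1r (proj_in hM.1 g hx) eqxx.
Qed.


Unset Implicit Arguments.

Theorem mainTheorem4 (G : groupType) (S : pzRingType) (SG : G -> S -> Prop)
    (g : G) :
  graded_ring SG -> eps_strongly_graded SG ->
  (* (i) *)
  (forall (M : lmodType S) (MG : G -> M -> Prop),
     graded_module SG MG -> gr_simple MG ->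
     forall (T : lmodType S) (beta : S -> M -> T), is_Ind SG MG g beta ->
       (forall t : T, t = 0) \/ gr_simple (Ind_grading SG MG g beta)) /\
  (* (ii) *)
  (forall (M : lmodType S) (MG : G -> M -> Prop),
     graded_module SG MG -> gr_injective SG MG -> Cg_torsion_free MG g ->
     forall (T : lmodType S) (beta : S -> M -> T), is_Ind SG MG g beta ->
       gr_injective SG (Ind_grading SG MG g beta)) /\
  (* (iii) *)
  (forall (M : lmodType S) (MG : G -> M -> Prop),
     graded_module SG MG -> gr_projective SG MG ->
     R_projective_component SG MG g).
Proof.
move=> hgr [eps heps]; split.
  move=> M MG hM hs T beta hI; right.
  exact: (@part1 G S SG g hgr eps heps M MG hM hs T beta hI).
split.
  exact: (@part2 G S SG g hgr eps heps).
exact: (@part3 G S SG g hgr eps heps).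
Qed.
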